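(* There exists an absolute constant $c>0$ such that the following holds. Let $(\mathsf{CAL}_T)_{T\ge1}$ be calibration measures and $\varepsilon:\mathbb Z_{>0}\to[0,\infty)$ a function such that for every positive integer $T$: (1) (Actionability) for every decision task $Z=(A,U)$ with $U:A\times\{0,1\}\to[0,1]$ and every $\alpha\ge0$ there exists a randomized response function $r_{Z,\alpha}:[0,1]\to\Delta(A)$ (not depending on the distribution) such that every distribution $\mathcal D$ on $[0,1]\times\{0,1\}$ with $\mathsf{CAL}_T(\mathcal D)\le\alpha$ satisfies $\mathsf{SR}_Z(r_{Z,\alpha},\mathcal D)\le\alpha$; and (2) (Testability) for every calibrated distribution $\mathcal D$ on $[0,1]\times\{0,1\}$, if $S_T$ is the uniform distribution over $T$ i.i.d. samples from $\mathcal D$, then $\mathbb E[\mathsf{CAL}_T(S_T)]\le\varepsilon(T)$. Then $\varepsilon(T)\ge c\,T^{-1/2}$ for every positive integer $T$.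
   Context: A calibration measure $\mathsf{CAL}_T$ assigns a nonnegative real number to each distribution of pairs $(p,y)\in[0,1]\times\{0,1\}$ (in particular to uniform distributions over finite samples). A distribution of $(p,y)$ is calibrated if $\mathbb E[y\mid p]=p$. A decision task $Z=(A,U)$ consists of an action set $A$ and a utility function $U:A\times\{0,1\}\to[0,1]$. For a randomized response function $r:[0,1]\to\Delta(A)$ and a distribution $\mathcal D$ on $[0,1]\times\{0,1\}$, the swap regret is $\mathsf{SR}_Z(r,\mathcal D)=\sup_{\sigma:A\to A}\mathbb E_{(p,y)\sim\mathcal D,\,a\sim r(p)}[U(\sigma(a),y)-U(a,y)]$. *)

(* Defs.v *)
(* Distributions on [0,1] x {0,1} are represented by their
   probability mass functions m : R -> bool -> R with finite support. *)
From HB Require Import structures.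
From mathcomp Require Import all_boot all_order all_algebra.
From mathcomp Require Import reals.
Set Implicit Arguments. Unset Strict Implicit. Unset Printing Implicit Defensive.
Import Order.TTheory GRing.Theory Num.Theory.
Local Open Scope ring_scope.

Section Defs.
Variable R : realType.

Definition is_dist_on (m : R -> bool -> R) (s : seq R) : Prop :=
  [/\ uniq s,
      (forall p y, 0 <= m p y),
      (forall p y, m p y != 0 -> p \in s),
      (forall p, p \in s -> 0 <= p <= 1) &
      \sum_(p <- s) (m p false + m p true) = 1].

Definition is_dist (m : R -> bool -> R) : Prop := exists s, is_dist_on m s.

(* calibrated: E[y | p] = p, i.e. P(p, y=1) = p * P(p) for every p *)
Definition calibrated (m : R -> bool -> R) : Prop :=
  forall p, m p true = p * (m p false + m p true).

Definition expect (m : R -> bool -> R) (s : seq R) (g : R -> bool -> R) : R :=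
  \sum_(p <- s) \sum_(y : bool) m p y * g p y.

Definition is_response (A : finType) (r : R -> A -> R) : Prop :=
  forall p, 0 <= p <= 1 -> (forall a, 0 <= r p a) /\ \sum_(a : A) r p a = 1.

Definition is_utility (A : finType) (U : A -> bool -> R) : Prop :=
  forall a y, 0 <= U a y <= 1.

Definition swap_gain (A : finType) (U : A -> bool -> R) (r : R -> A -> R)
    (m : R -> bool -> R) (s : seq R) (sigma : A -> A) : R :=
  expect m s (fun p y => \sum_(a : A) r p a * (U (sigma a) y - U a y)).

(* swap regret: supremum over all sigma : A -> A (a finite max; sigma = id gives 0) *)
Definition swap_regret (A : finType) (U : A -> bool -> R) (r : R -> A -> R)
    (m : R -> bool -> R) (s : seq R) : R :=
  \big[Num.max/0]_(sigma : {ffun A -> A}) swap_gain U r m s sigma.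

Definition empirical (T : nat) (x : 'I_T -> R * bool) : R -> bool -> R :=
  fun p y => (#|[set i | x i == (p, y)]|)%:R / T%:R.

(* E[ CAL_T(S_T) ] where S_T is the empirical distribution of T i.i.d.
   samples from m (sample points are drawn from the support list s). *)
Definition expected_cal (CAL : (R -> bool -> R) -> R) (T : nat)
    (m : R -> bool -> R) (s : seq R) : R :=
  \sum_(f : {ffun 'I_T -> 'I_(size s) * bool})
     (\prod_(i < T) m (nth 0 s (f i).1) (f i).2) *
     CAL (empirical (fun i => (nth 0 s (f i).1, (f i).2))).

End Defs.

(* Main.v *)
Require Import Defs.
From HB Require Import structures.
From mathcomp Require Import all_boot all_order all_algebra.
From mathcomp Require Import reals.
From mathcomp Require Import zify ring lra.
Import Order.TTheory GRing.Theory Num.Theory.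

Lemma bin_up T j : j.*2.+1 <= T -> 'C(T, j) <= 'C(T, j.+1).
Proof.
move=> h; have e := mul_bin_left T j.
have : j.+1 * 'C(T, j) <= j.+1 * 'C(T, j.+1).
  rewrite e; apply: leq_mul => //; lia.
by rewrite leq_pmul2l.
Qed.

Lemma bin_le_half T j : 'C(T, j) <= 'C(T, T./2).
Proof.
have H : forall d j, j + d = T./2 -> 'C(T, j) <= 'C(T, T./2).
  elim=> [|d IH] k hk; first by rewrite addn0 in hk; rewrite hk.
  apply: leq_trans (IH k.+1 _); last by rewrite addSnnS.
  apply: bin_up.
  have := half_leq (leqnn T); have := odd_double_half T. lia.
case: (leqP j T./2) => hj.
  by apply: (H (T./2 - j)); rewrite subnKC.
case: (leqP j T) => hjT; last by rewrite bin_small.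
rewrite -bin_sub //; apply: (H (T./2 - (T - j))).
rewrite subnKC //. have := odd_double_half T. lia.
Qed.

Lemma bin_2 n : 'C(n.*2.+2, n.+1) = 2 * 'C(n.*2.+1, n).
Proof.
rewrite binS.
have -> : 'C(n.*2.+1, n.+1) = 'C(n.*2.+1, n).
  rewrite -bin_sub; last lia. congr 'C(_, _). lia.
by rewrite mul2n addnn.
Qed.

Lemma bin_2' n : n.+1 * 'C(n.*2.+1, n) = n.*2.+1 * 'C(n.*2, n).
Proof.
have := mul_bin_diag n.*2.+1 n.
have -> : 'C(n.*2.+1, n.+1) = 'C(n.*2.+1, n).
  rewrite -bin_sub; last lia. congr 'C(_, _). lia.
by move=> ->.
Qed.

Lemma cbin n : 'C(n.*2, n) ^ 2 * n.*2.+1 <= 16 ^ n.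
Proof.
elim: n => [|n IH]; first by rewrite bin0.
have e1 := bin_2 n; have e2 := bin_2' n.
have -> : n.+1.*2 = n.*2.+2 by rewrite doubleS.
rewrite e1.
set X := 'C(n.*2, n) in IH e2 *; set Y := 'C(n.*2.+1, n) in e1 e2 *.
rewrite -(@leq_pmul2l (n.+1 ^ 2)) //.
have -> : n.+1 ^ 2 * ((2 * Y) ^ 2 * n.*2.+3) = 4 * (n.*2.+1 * n.*2.+3) * (X ^ 2 * n.*2.+1).
  have -> : n.+1 ^ 2 * ((2 * Y) ^ 2 * n.*2.+3) = 4 * (n.+1 * Y) ^ 2 * n.*2.+3 by ring.
  rewrite e2; ring.
rewrite [16 ^ n.+1]expnS.
apply: (@leq_trans (4 * (n.*2.+1 * n.*2.+3) * 16 ^ n)).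
  by apply: leq_mul.
rewrite [X in _ <= X]mulnA; apply: leq_mul => //. rewrite -!mul2n. nia.
Qed.

Lemma binmax T j : 'C(T, j) ^ 2 * T.+1 <= 4 ^ T.
Proof.
apply: (@leq_trans ('C(T, T./2) ^ 2 * T.+1)).
  by apply: leq_mul => //; rewrite leq_exp2r // bin_le_half.
have := odd_double_half T; set n := T./2; case: (odd T) => /= hT.
  have h := cbin n.+1. rewrite -hT bin_2 doubleS in h *.
  have -> : 4 ^ n.*2.+1 = 4 * 16 ^ n by rewrite -mul2n expnS expnM.
  rewrite -(@leq_pmul2l 4) //.
  rewrite [4 * (4 * _)]mulnA -expnS.
  apply: leq_trans h. 
  have -> : (2 * 'C(n.*2.+1, n)) ^ 2 = 4 * 'C(n.*2.+1, n) ^ 2 by rewrite expnMn.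
  rewrite -mulnA leq_pmul2l // leq_mul2l; apply/orP; right; by [].
rewrite add0n in hT; rewrite -hT.
have -> : 4 ^ n.*2 = 16 ^ n by rewrite -mul2n expnM.
exact: cbin.
Qed.

Lemma mid_bound T w Mx : (forall j, 'C(T, j) <= Mx) ->
  \sum_(0 <= j < T.+1 | (T <= j.*2 + w) && (j.*2 <= T + w)) 'C(T, j) <= w.+1 * Mx.
Proof.
move=> hM; set P := fun j => (T <= j.*2 + w) && (j.*2 <= T + w).
apply: (@leq_trans (\sum_(0 <= j < T.+1 | P j) Mx)); first exact: leq_sum.
rewrite big_const_seq iter_addn_0 [w.+1 * _]mulnC leq_mul2l; apply/orP; right.
rewrite -size_filter /index_iota subn0.
have -> : w.+1 = size (iota ((T - w) %/ 2) w.+1) by rewrite size_iota.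
apply: uniq_leq_size; first by rewrite filter_uniq // iota_uniq.
move=> j; rewrite mem_filter => /andP[hP _]; move/andP: hP => [h1 h2].
rewrite mem_iota; apply/andP; split; lia.
Qed.

Lemma sym_LH T w : \sum_(j < T.+1 | T + w < j.*2) 'C(T, j) =
  \sum_(j < T.+1 | j.*2 + w < T) 'C(T, j).
Proof.
rewrite (reindex_inj rev_ord_inj) /=.
apply: eq_big => j; rewrite /= subSS; have := ltn_ord j.
  move=> h; apply/idP/idP; lia.
by move=> _ _; rewrite bin_sub // -ltnS.
Qed.

Lemma split3 T w : \sum_(j < T.+1) 'C(T, j) =
  \sum_(j < T.+1 | j.*2 + w < T) 'C(T, j) +
  \sum_(j < T.+1 | (T <= j.*2 + w) && (j.*2 <= T + w)) 'C(T, j) +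
  \sum_(j < T.+1 | T + w < j.*2) 'C(T, j).
Proof.
rewrite (big_mkcond (fun j : 'I_T.+1 => j.*2 + w < T)).
rewrite (big_mkcond (fun j : 'I_T.+1 => (T <= j.*2 + w) && (j.*2 <= T + w))).
rewrite (big_mkcond (fun j : 'I_T.+1 => T + w < j.*2)).
rewrite -!big_split /=; apply: eq_bigr => j _.
case: ifP; case: ifP; case: ifP; lia.
Qed.

Local Open Scope ring_scope.

Section Helpers.
Variable R : realType.

Lemma sum_K T (F : nat -> R) :
  \sum_(x : {ffun 'I_T -> 'I_1 * bool}) F #|[set i | (x i).2]| =
  \sum_(j < T.+1) 'C(T, j)%:R * F j.
Proof.
pose h := fun A : {set 'I_T} => [ffun i => (ord0 : 'I_1, i \in A)].
pose g := fun x : {ffun 'I_T -> 'I_1 * bool} => [set i | (x i).2].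
have c1 : cancel h g by move=> A; apply/setP => i; rewrite /g /h !inE ffunE.
have c2 : cancel g h.
  move=> x; apply/ffunP => i; rewrite /g /h ffunE inE.
  by case: (x i) => a b /=; rewrite (ord1 a).
rewrite (reindex h); last exact: onW_bij (Bijective c1 c2).
under eq_bigr => A _ do rewrite -/(g (h A)) c1.
rewrite (partition_big (fun A : {set 'I_T} => inord #|A| : 'I_T.+1) xpredT) //=.
apply: eq_bigr => j _.
have hc : forall A : {set 'I_T}, (inord #|A| == j :> 'I_T.+1) = (#|A| == j).
  move=> A; rewrite -val_eqE /= inordK // ltnS.
  by have := max_card (mem A); rewrite card_ord.
rewrite (eq_bigl (fun A : {set 'I_T} => #|A| == j)); last by move=> A; rewrite hc.
rewrite (eq_bigr (fun _ => F j)); last by move=> A /eqP ->.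
rewrite sumr_const.
have := card_draws 'I_T j; rewrite card_ord => <-.
rewrite mulr_natl; congr (_ *+ _); apply: eq_card => A; by rewrite inE.
Qed.

Lemma bigmax_ge (I : eqType) (r : seq I) (F : I -> R) j :
  j \in r -> F j <= \big[Num.max/0]_(i <- r) F i.
Proof.
elim: r => //= a r IH; rewrite in_cons big_cons => /orP[/eqP->|h].
  by rewrite le_max lexx.
by rewrite le_max IH ?orbT.
Qed.

Section Emp.
Variables (T : nat) (x : 'I_T -> R * bool).
Hypothesis T0 : (0 < T)%N.
Hypothesis hx1 : forall i, (x i).1 = 2^-1.
Let K := #|[set i | (x i).2]|.

Lemma K_le : (K <= T)%N.
Proof. by have := max_card (mem [set i | (x i).2]); rewrite card_ord. Qed.

Lemma emp_val p y : empirical x p y =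
  if p == 2^-1 then (if y then K%:R / T%:R else (T - K)%:R / T%:R) else 0.
Proof.
have hx : forall i, x i = (2^-1, (x i).2).
  by move=> i; rewrite -(hx1 i) -surjective_pairing.
rewrite /empirical; case: eqP => [->|ne].
  case: y.
    congr (_%:R / _); apply: eq_card => i; rewrite !inE.
    by rewrite [x i]hx xpair_eqE eqxx /=; case: (x i).2.
  have e := cardsC [set i | (x i).2]; rewrite card_ord in e.
  have -> : (T - K = #|~: [set i | (x i).2]|)%N by move: e; rewrite /K; lia.
  congr (_%:R / _); apply: eq_card => i; rewrite !inE.
  by rewrite [x i]hx xpair_eqE eqxx /=; case: (x i).2.
have -> : #|[set i | x i == (p, y)]| = 0%N.
  apply: eq_card0 => i; rewrite !inE [x i]hx xpair_eqE.
  by case: eqP => // e; case: ne.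
by rewrite mul0r.
Qed.

Lemma emp_dist : is_dist_on (empirical x) [:: 2^-1].
Proof.
split => //.
- by move=> p y; rewrite /empirical divr_ge0 ?ler0n.
- move=> p y; rewrite emp_val; case: (p =P 2^-1) => [-> _|_]; first by rewrite mem_seq1.
  by rewrite eqxx.
- by move=> p; rewrite mem_seq1 => /eqP ->; apply/andP; split; lra.
rewrite big_seq1 !emp_val eqxx natrB ?K_le //.
have hT : (T%:R : R) != 0 by rewrite pnatr_eq0 -lt0n.
by field.
Qed.

Lemma gain_val (r : R -> bool -> R) (b : bool) :
  swap_gain (fun a y : bool => ((a == y)%:R : R)) r (empirical x) [:: 2^-1] [ffun _ => b] =
  if b then r (2^-1) false * (K%:R / T%:R - (T - K)%:R / T%:R)
  else r (2^-1) true * ((T - K)%:R / T%:R - K%:R / T%:R).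
Proof.
rewrite /swap_gain /expect big_seq1 !big_bool /= !ffunE !emp_val eqxx /=.
by case: b => /=; ring.
Qed.

End Emp.
Lemma final_ineq (t w sg u al : R) : 1 <= t -> 0 <= w -> w <= t/8 -> t/8 < w + 1 ->
  0 <= u -> 0 <= sg -> 1 <= 2*sg + (w+1)*u -> u^+2 * (t^+2 + 1) <= 1 ->
  al = (2*w+1)/(4*t^+2) -> 1/1000/t <= sg * al.
Proof.
move=> t1 w0 wt tw u0 sg0 h1 h2 ->.
pose v := (t/8 + 1) * u.
have v0 : 0 <= v by rewrite /v; apply: mulr_ge0 => //; lra.
have hv : (w + 1) * u <= v by rewrite /v; apply: ler_wpM2r => //; lra.
have hv2 : v^+2 * (t^+2 + 1) <= (t/8+1)^+2.
  have -> : v^+2 * (t^+2 + 1) = (t/8+1)^+2 * (u^+2 * (t^+2 + 1)) by rewrite /v; ring.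
  rewrite -[X in _ <= X]mulr1; apply: ler_wpM2l => //; apply: sqr_ge0.
have hq : (t/8+1)^+2 <= 81/100 * (t^+2 + 1) by nra.
have hv3 : v^+2 <= 81/100.
  have tp : 0 < t^+2 + 1 by nra.
  rewrite -(ler_pM2r tp); lra.
have hv4 : v <= 9/10 by nra.
have hsg : 1/20 <= sg by lra.
have tp : 0 < t by lra.
have -> : (2 * w + 1) / (4 * t ^+ 2) = ((2 * w + 1) / (4 * t)) / t by field; lra.
rewrite mulrA ler_pM2r ?invr_gt0 //.
have hw : 1/32 <= (2 * w + 1) / (4 * t).
  rewrite ler_pdivlMr; last lra. lra.
nra.
Qed.

Lemma ineqA (q Tn Kn wn : R) : 2^-1 <= q -> Kn*2 + wn + 1 <= Tn -> 0 < Tn -> 0 <= wn ->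
  (wn*2 + 1) / (4 * Tn) < q * ((Tn - Kn) / Tn - Kn / Tn).
Proof.
move=> hq hK hT hw; rewrite -subr_gt0.
have -> : q * ((Tn - Kn) / Tn - Kn / Tn) - (wn * 2 + 1) / (4 * Tn) =
  (4 * q * (Tn - Kn * 2) - (wn * 2 + 1)) / (4 * Tn) by field; lra.
apply: divr_gt0; nra.
Qed.

Lemma ineqB (q Tn Kn wn : R) : 2^-1 <= q -> Tn + wn + 1 <= Kn * 2 -> 0 < Tn -> 0 <= wn ->
  (wn*2 + 1) / (4 * Tn) < q * (Kn / Tn - (Tn - Kn) / Tn).
Proof.
move=> hq hK hT hw; rewrite -subr_gt0.
have -> : q * (Kn / Tn - (Tn - Kn) / Tn) - (wn * 2 + 1) / (4 * Tn) =
  (4 * q * (Kn * 2 - Tn) - (wn * 2 + 1)) / (4 * Tn) by field; lra.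
apply: divr_gt0; nra.
Qed.
End Helpers.

Lemma nth_s (R : realType) (k : 'I_(size [:: (2^-1 : R)])) : nth 0 [:: (2^-1 : R)] k = 2^-1.
Proof. by case: k => [[|k]]. Qed.

Theorem theorem8p1 (R : realType) :
  exists c : R, 0 < c /\
  forall (CAL : nat -> (R -> bool -> R) -> R) (eps : nat -> R),
    (forall T, (0 < T)%N -> 0 <= eps T) ->
    (* calibration measures are nonnegative *)
    (forall T m, (0 < T)%N -> is_dist m -> 0 <= CAL T m) ->
    (* (1) actionability *)
    (forall T, (0 < T)%N ->
       forall (A : finType), (0 < #|A|)%N ->
       forall U : A -> bool -> R, is_utility U ->
       forall alpha : R, 0 <= alpha ->
       exists r : R -> A -> R, is_response r /\
         forall m s, is_dist_on m s -> CAL T m <= alpha ->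
           swap_regret U r m s <= alpha) ->
    (* (2) testability *)
    (forall T, (0 < T)%N ->
       forall m s, is_dist_on m s -> calibrated m ->
         expected_cal (CAL T) T m s <= eps T) ->
    forall T, (0 < T)%N -> c / Num.sqrt (T%:R) <= eps T.
Proof.
exists (1 / 1000); split; first lra.
move=> CAL eps Heps Hnn Hact Htest T T0.
pose U := fun a y : bool => ((a == y)%:R : R).
have HU : is_utility U by move=> a y; rewrite /U; case: (a == y) => /=; apply/andP; split; lra.
pose t := Num.sqrt (T%:R : R).
pose w := Num.truncn (t / 8).
pose alpha : R := (w.*2.+1)%:R / (4 * T%:R).
have hT : (0 : R) < T%:R by rewrite ltr0n.
have Ha0 : 0 <= alpha by rewrite /alpha divr_ge0 // ?ler0n // mulr_ge0 // ?ler0n // ltW.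
have hb : (0 < #|{: bool}|)%N by rewrite card_bool.
have [r [Hr Hreg]] := Hact T T0 bool hb U HU alpha Ha0.
set qT := r (2^-1) true; set qF := r (2^-1) false.
have h12 : 0 <= (2^-1 : R) <= 1 by apply/andP; split; lra.
have [hq0 hq1] := Hr (2^-1) h12.
rewrite big_bool in hq1.
have hsum : qT + qF = 1 by exact: hq1.
have qT0 := hq0 true; have qF0 := hq0 false.
pose caseA := (2^-1 <= qT).
pose cond := fun j : nat => if caseA then (j.*2 + w < T)%N else (T + w < j.*2)%N.
have key : forall x : 'I_T -> R * bool, (forall i, (x i).1 = 2^-1) ->
   alpha * (cond #|[set i | (x i).2]|)%:R <= CAL T (empirical x).
  move=> x hx1; set K := #|[set i | (x i).2]|.
  have hd := @emp_dist R T x T0 hx1.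
  have hKT : (K <= T)%N := @K_le R T x.
  case hc: (cond K) => /=; last first.
    rewrite mulr0; apply: Hnn => //; by exists [:: 2^-1].
  rewrite mulr1.
  case: (leP (CAL T (empirical x)) alpha) => hle; last exact: ltW.
  exfalso.
  have hreg := Hreg _ _ hd hle.
  pose b := ~~ caseA.
  have hg := @bigmax_ge R _ _ (fun sigma : {ffun bool -> bool} =>
     swap_gain U r (empirical x) [:: 2^-1] sigma) _ (mem_index_enum [ffun _ => b]).
  have hgt : alpha < swap_gain U r (empirical x) [:: 2^-1] [ffun _ => b].
    rewrite (@gain_val R T x T0 hx1) /b /alpha.
    move: hc; rewrite /cond /caseA -/K; case: (boolP (2^-1 <= qT)) => hq hc /=.
      have ew : ((w.*2.+1)%:R : R) = w%:R * 2 + 1 by rewrite -addn1 -muln2 natrD natrM.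
      have e : ((K.*2 + w).+1%:R : R) = K%:R * 2 + w%:R + 1.
        by rewrite -addn1 -muln2 !natrD natrM.
      have hr : K%:R * 2 + w%:R + 1 <= (T%:R : R) by rewrite -e ler_nat.
      rewrite ew natrB //; apply: ineqA => //.
    have ew : ((w.*2.+1)%:R : R) = w%:R * 2 + 1 by rewrite -addn1 -muln2 natrD natrM.
    have e : ((T + w).+1%:R : R) = T%:R + w%:R + 1 by rewrite -addn1 !natrD.
    have hr : T%:R + w%:R + 1 <= (K%:R * 2 : R) by rewrite -e -natrM muln2 ler_nat.
    rewrite ew natrB //; apply: ineqB => //.
    rewrite -ltNge in hq; rewrite -/qF; lra.
  have := lt_le_trans hgt (le_trans hg hreg); by rewrite ltxx.
pose m0 := fun (p : R) (_ : bool) => if p == 2^-1 then (2^-1 : R) else 0.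
have hm : is_dist_on m0 [:: 2^-1].
  split => //.
  - by move=> p y; rewrite /m0; case: ifP => _; lra.
  - move=> p y; rewrite /m0; case: (p =P 2^-1) => [-> _|_]; first by rewrite mem_seq1.
    by rewrite eqxx.
  - by move=> p; rewrite mem_seq1 => /eqP ->.
  - rewrite big_seq1 /m0 eqxx; lra.
have hcal : calibrated m0.
  move=> p; rewrite /m0; case: (p =P 2^-1) => [->|_]; first lra.
  by rewrite addr0 mulr0.
have Hexp := Htest T T0 m0 [:: 2^-1] hm hcal.
rewrite /expected_cal in Hexp.
have hlow : (2^-1)^+T * alpha * (\sum_(j < T.+1 | cond j) 'C(T, j))%:R <= eps T.
  apply: le_trans Hexp.
  have -> : (\sum_(j < T.+1 | cond j) 'C(T, j))%:R = \sum_(j < T.+1) 'C(T,j)%:R * (cond j)%:R :> R.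
    rewrite natr_sum big_mkcond /=; apply: eq_bigr => j _.
    by case: (cond j); rewrite ?mulr1 ?mulr0.
  rewrite -(@sum_K R T (fun j => (cond j)%:R)).
  rewrite mulr_sumr; apply: ler_sum => f _.
  rewrite (eq_bigr (fun _ => 2^-1)); last by move=> i _; rewrite (@nth_s R) /m0 eqxx.
  rewrite prodr_const card_ord -mulrA; apply: ler_wpM2l; first by apply: exprn_ge0; lra.
  exact: (key (fun i => (nth 0 [:: 2^-1] (f i).1, (f i).2)) (fun i => @nth_s R _)).
have hsym : (\sum_(j < T.+1 | cond j) 'C(T, j) = \sum_(j < T.+1 | j.*2 + w < T) 'C(T, j))%N.
  case hA: caseA.
    by apply: eq_bigl => j; rewrite /cond hA.
  by rewrite -sym_LH; apply: eq_bigl => j; rewrite /cond hA.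
rewrite hsym in hlow.
set L := \sum_(j < T.+1 | (j.*2 + w < T)%N) 'C(T, j) in hlow hsym.
set Mx := 'C(T, T./2).
have tot : (\sum_(j < T.+1) 'C(T, j) = 2 ^ T)%N.
  have e := @sum_K R T (fun _ => 1).
  have e2 : \sum_(j < T.+1) 'C(T,j)%:R * (1:R) = (\sum_(j < T.+1) 'C(T,j))%:R.
    by rewrite natr_sum; apply: eq_bigr => j _; rewrite mulr1.
  rewrite e2 sumr_const card_ffun card_prod card_ord card_bool mul1n in e.
  rewrite card_ord in e; by apply/eqP; rewrite -(eqr_nat R) e.
have hnat : (2 ^ T <= L.*2 + w.+1 * Mx)%N.
  have h3 := split3 T w. have hs := sym_LH T w.
  have hmid := mid_bound T w Mx (bin_le_half T); rewrite big_mkord in hmid.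
  rewrite -/L in h3 hs. lia.
have hbm := binmax T (T./2); rewrite -/Mx in hbm.
have t0 : 0 <= t by apply: sqrtr_ge0.
have tT : t ^+ 2 = T%:R by rewrite sqr_sqrtr // ler0n.
have T1 : (1 : R) <= T%:R by rewrite ler1n.
have t1 : 1 <= t by nra.
have t80 : 0 <= t / 8 by apply: divr_ge0.
have hw1 : (w%:R : R) <= t / 8 by rewrite -truncn_ge_nat.
have hw2 : t / 8 < w%:R + 1 by rewrite natr1 -truncn_le_nat.
pose P : R := 2 ^+ T.
have Pp : 0 < P by apply: exprn_gt0; lra.
have h1 : P <= 2 * L%:R + (w%:R + 1) * Mx%:R.
  have := hnat; rewrite -(ler_nat R) natrX natrD natrM -muln2 natrM natr1.
  by move=> h; rewrite /P; lra.
have h2 : Mx%:R ^+ 2 * (T%:R + 1) <= P ^+ 2.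
  have := hbm; rewrite -(ler_nat R) natrM natrX natr1 natrX.
  by rewrite /P -exprM mulnC exprM (_ : 4%:R = 2 ^+ 2 :> R) //; lra.
apply: le_trans hlow.
have -> : (2^-1) ^+ T * alpha * (L%:R : R) = (L%:R / P) * alpha.
  by rewrite /P exprVn; field; exact: (lt0r_neq0 Pp).
apply: (@final_ineq R t w%:R (L%:R / P) (Mx%:R / P) alpha) => //.
- by rewrite divr_ge0 // ltW.
- by rewrite divr_ge0 // ltW.
- rewrite -(ler_pM2r Pp).
  have -> : (2 * (L%:R / P) + (w%:R + 1) * (Mx%:R / P)) * P = 2 * L%:R + (w%:R + 1) * Mx%:R.
    by field; lra.
  lra.
- rewrite -(ler_pM2r (exprn_gt0 2 Pp)) mul1r tT.
  have -> : (Mx%:R / P) ^+ 2 * (T%:R + 1) * P ^+ 2 = Mx%:R ^+ 2 * (T%:R + 1).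
    by field; lra.
  exact: h2.
- by rewrite /alpha tT -addn1 -muln2 natrD natrM; field; lra.
Qed.
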